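(* There exists an invertible $21\times21$ binary matrix such that the corresponding linear kernel has partial distance sequence $(1,2,2,2,2,2,4,4,4,4,4,4,8,8,8,8,8,8,12,12,12)$. Consequently $E_{21}\ge\frac1{21}\sum_{i=0}^{20}\log_{21}D_{min}^{(i)}\approx0.49604$.
   Context: A kernel of dimension $\ell$ is a bijection $g:\{0,1\}^\ell\to\{0,1\}^\ell$; a linear kernel is $g({\bf u})={\bf u}G$ over $\mathbb{F}_2$ for an invertible $\ell\times\ell$ binary matrix $G$. ${\bf a}\bullet{\bf b}$ denotes concatenation, $d_H$ Hamming distance. Partial distances: $D_{min}^{(i)}=\min\{d_H(g({\bf w}\bullet 0\bullet{\bf u}),g({\bf w}\bullet 1\bullet {\bf v})) : {\bf w}\in\{0,1\}^i,\ {\bf u},{\bf v}\in\{0,1\}^{\ell-i-1}\}$, $i=0,\dots,\ell-1$; exponent $E(g)=\frac1\ell\sum_{i}\log_\ell D_{min}^{(i)}$; $E_\ell=\max_g E(g)$ over all kernels of dimension $\ell$. *)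

(* Defs.v *)
From HB Require Import structures.
From mathcomp Require Import all_boot all_order all_algebra all_fingroup.

Set Implicit Arguments.
Unset Strict Implicit.
Unset Printing Implicit Defensive.

Definition f0 : 'F_2 := 0%R.
Definition f1 : 'F_2 := 1%R.

From Stdlib Require Import Reals.

Definition word (l : nat) := 'rV['F_2]_l.

Definition dH (l : nat) (x y : word l) : nat := (\sum_(j < l) (x ord0 j != y ord0 j))%N.

Definition split_pair (l i : nat) (x y : word l) : bool :=
  [forall j : 'I_l, ((j < i)%N ==> (x ord0 j == y ord0 j))] &&
  [forall j : 'I_l, ((j == i :> nat) ==> ((x ord0 j == f0) && (y ord0 j == f1)))].

(* partial distance D_min^(i) of a map g : {0,1}^l -> {0,1}^l.
   The minimum is over a nonempty finite set (for i < l) of values <= l,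
   so the neutral element l of the min-fold is harmless. *)
Definition partial_dist (l : nat) (g : word l -> word l) (i : nat) : nat :=
  \big[minn/l]_(x : word l) \big[minn/l]_(y : word l | split_pair i x y) dH (g x) (g y).

Definition linear_kernel (l : nat) (G : 'M['F_2]_l) : word l -> word l :=
  fun u => mulmx u G.

Definition logb (l : nat) (x : R) : R := (ln x / ln (INR l))%R.

Definition exponent (l : nat) (g : word l -> word l) : R :=
  (/ INR l * \big[Rplus/0%R]_(i < l) logb l (INR (partial_dist g i)))%R.

(* E_l = max over all kernels (bijections of {0,1}^l) of E(g).
   Exponents of bijections are >= 0 (all D >= 1), so 0 is a harmless seed. *)
Definition E_max (l : nat) : R :=
  \big[Rmax/0%R]_(g : {perm word l}) exponent (fun u => g u).

Definition pd21 : seq nat :=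
  [:: 1; 2; 2; 2; 2; 2; 4; 4; 4; 4; 4; 4; 8; 8; 8; 8; 8; 8; 12; 12; 12]%N.

(* Main.v *)
Require Import Defs.
From HB Require Import structures.
From mathcomp Require Import all_boot all_order all_algebra all_fingroup.
From Stdlib Require Import Reals.
From Stdlib Require Import FunctionalExtensionality.

Set Implicit Arguments.
Unset Strict Implicit.
Unset Printing Implicit Defensive.

Definition rowsL : seq (seq bool) := [::
  [:: true; false; false; false; false; false; false; false; false; false; false; false; false; false; false; false; false; false; false; false; false];
  [:: true; true; false; false; false; false; false; false; false; false; false; false; false; false; false; false; false; false; false; false; false];
  [:: true; false; true; false; false; false; false; false; false; false; false; false; false; false; false; false; false; false; false; false; false];
  [:: true; false; false; true; false; false; false; false; false; false; false; false; false; false; false; false; false; false; false; false; false];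
  [:: true; false; false; false; true; false; false; false; false; false; false; false; false; false; false; false; false; false; false; false; false];
  [:: true; false; false; false; false; true; false; false; false; false; false; false; false; false; false; false; false; false; false; false; false];
  [:: true; true; false; true; false; false; true; false; false; false; false; false; false; false; false; false; false; false; false; false; false];
  [:: false; true; false; false; true; true; false; true; false; false; false; false; false; false; false; false; false; false; false; false; false];
  [:: true; false; true; true; false; true; true; false; true; false; false; false; false; false; false; false; false; false; false; false; false];
  [:: true; true; true; true; false; true; false; false; false; true; false; false; false; false; false; false; false; false; false; false; false];
  [:: false; true; false; true; false; true; false; false; true; true; true; false; false; false; false; false; false; false; false; false; false];
  [:: true; true; false; false; false; false; false; false; false; true; false; true; false; false; false; false; false; false; false; false; false];
  [:: true; true; true; false; true; false; false; true; false; false; true; true; true; false; false; false; false; false; false; false; false];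
  [:: true; true; false; true; true; true; true; false; true; true; true; true; true; true; false; false; false; false; false; false; false];
  [:: true; true; false; false; true; true; true; true; false; true; false; false; false; false; true; false; false; false; false; false; false];
  [:: false; false; false; false; true; true; true; true; true; false; false; true; true; false; false; true; false; false; false; false; false];
  [:: false; true; true; true; false; false; true; true; false; false; true; false; false; false; true; false; true; false; false; false; false];
  [:: false; false; true; false; true; true; false; false; true; false; true; false; true; true; false; false; false; true; false; false; false];
  [:: true; true; true; false; true; false; true; true; false; false; false; true; false; true; true; false; true; true; true; false; false];
  [:: false; false; true; true; true; true; true; true; true; false; true; false; false; false; false; true; true; true; false; true; false];
  [:: false; true; false; false; true; true; false; true; true; true; false; false; true; false; true; true; true; false; true; false; true]].

Definition suffs : seq (seq bool) := [::
  [:: false; false; false; false; false; false; false; false; false; false; false; false; false; false; false; false; false; false; false; false];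
  [:: false; false; false; false; false; false; false; false; false; false; false; false; false; false; false; false; false; false; false];
  [:: false; false; false; false; false; false; false; false; false; false; false; false; false; false; false; false; false; false];
  [:: false; false; false; false; false; false; false; false; false; false; false; false; false; false; false; false; false];
  [:: false; false; false; false; false; false; false; false; false; false; false; false; false; false; false; false];
  [:: false; false; false; false; false; false; false; false; false; false; false; false; false; false; false];
  [:: false; false; false; false; false; false; false; false; false; false; false; false; false; false];
  [:: false; false; false; false; false; false; false; false; false; false; false; false; false];
  [:: true; false; false; false; false; false; false; false; false; false; false; false];
  [:: true; false; false; false; false; false; false; false; false; false; false];
  [:: false; true; true; false; false; true; false; false; false; false];
  [:: false; false; false; false; false; false; false; false; false];
  [:: false; false; false; false; false; false; false; false];
  [:: true; false; false; false; false; false; false];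
  [:: false; false; false; false; false; false];
  [:: false; false; false; false; false];
  [:: false; false; false; false];
  [:: false; false; false];
  [:: false; false];
  [:: false];
  [::]].

Definition wt (v : seq bool) : nat := count (fun b : bool => b) v.

Fixpoint xorv (a b : seq bool) : seq bool :=
  match a, b with
  | x :: a', y :: b' => (x (+) y) :: xorv a' b'
  | [::], _ => b
  | _, [::] => a
  end.

Fixpoint lin (f : nat -> bool) (rs : seq (seq bool)) : seq bool :=
  match rs with
  | [::] => [::]
  | r :: rs' => xorv (if f 0 then r else [::]) (lin (fun k => f k.+1) rs')
  end.

Fixpoint chk (acc : seq bool) (rs : seq (seq bool)) (d : nat) : bool :=
  match rs with
  | [::] => d <= wt acc
  | r :: rs' => chk acc rs' d && chk (xorv acc r) rs' d
  end.

Definition wit (i : nat) : seq bool := nseq i false ++ true :: nth [::] suffs i.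

Lemma nth_xorv a b j : nth false (xorv a b) j = nth false a j (+) nth false b j.
Proof.
elim: a b j => [|x a IH] [|y b] [|j] //=; by rewrite addbF.
Qed.

Lemma size_xorv a b : size (xorv a b) = maxn (size a) (size b).
Proof.
elim: a b => [|x a IH] [|y b] //=; rewrite ?max0n ?maxn0 //.
by rewrite IH maxnSS.
Qed.

Lemma xorv0 a : xorv a [::] = a.
Proof. by case: a. Qed.

Lemma xorvA a b c : xorv a (xorv b c) = xorv (xorv a b) c.
Proof.
elim: a b c => [|x a IH] [|y b] [|z c] //=; by rewrite ?IH ?addbA ?xorv0.
Qed.

Lemma nth_lin f rs j :
  nth false (lin f rs) j = \big[addb/false]_(k < size rs) (f k && nth false (nth [::] rs k) j).
Proof.
elim: rs f => [|r rs IH] f /=; first by rewrite big_ord0 nth_nil.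
rewrite big_ord_recl /= nth_xorv IH; case: (f 0) => //=; by rewrite nth_nil.
Qed.

Lemma lin_ext f g rs : (forall k, k < size rs -> f k = g k) -> lin f rs = lin g rs.
Proof.
elim: rs f g => [|r rs IH] f g H //=.
rewrite (H 0) //; congr xorv; apply: IH => k Hk; exact: H.
Qed.

Lemma size_lin f rs n : all (fun r => size r <= n) rs -> size (lin f rs) <= n.
Proof.
elim: rs f => [|r rs IH] f //= /andP[Hr Hrs].
rewrite size_xorv geq_max IH // andbT; by case: (f 0).
Qed.

Lemma chk_wt acc rs d : chk acc rs d -> d <= wt acc.
Proof. elim: rs acc => [|r rs IH] acc //= /andP[H _]; exact: IH. Qed.

Lemma chkP acc rs d f : chk acc rs d -> d <= wt (xorv acc (lin f rs)).
Proof.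
elim: rs acc f => [|r rs IH] acc f /=; first by rewrite xorv0.
case/andP=> H1 H2; case: (f 0).
  rewrite xorvA; exact: IH.
exact: IH.
Qed.

Lemma lin_cat f rs1 rs2 : (forall k, k < size rs1 -> f k = false) ->
  lin f (rs1 ++ rs2) = lin (fun k => f (size rs1 + k)) rs2.
Proof.
elim: rs1 f => [|r rs1 IH] f H /=; first by apply: lin_ext.
rewrite H // IH => [|k Hk]; last by apply: H.
by apply: lin_ext => k _; rewrite addSn.
Qed.

Lemma sum_nth_count (v : seq bool) n : size v <= n ->
  (\sum_(j < n) nth false v j)%N = wt v.
Proof.
elim: n v => [|n IH] [|x v] //=; first by rewrite big_ord0.
  by move=> _; rewrite big1 // => j _; rewrite nth_nil.
by move=> Hs; rewrite big_ord_recl /= IH.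
Qed.
Lemma chk_all : all (fun i => chk (nth [::] rowsL i) (drop i.+1 rowsL) (nth 0 pd21 i)) (iota 0 21).
Proof. vm_compute. reflexivity. Qed.

Lemma wit_all : all (fun i => wt (lin (nth false (wit i)) rowsL) == nth 0 pd21 i) (iota 0 21).
Proof. vm_compute. reflexivity. Qed.
Import GRing.Theory.
Local Open Scope ring_scope.

Lemma F2_cases (x : 'F_2) : x = f0 \/ x = f1.
Proof.
have : (val x < 2)%nat by case: x.
case: x => [[|[|m]] Hm] //= _; [left|right]; exact: val_inj.
Qed.

Lemma F2_add1 (x y : 'F_2) : ((x + y) == f1) = (x == f1) (+) (y == f1).
Proof. by case: (F2_cases x) => ->; case: (F2_cases y) => ->. Qed.

Lemma F2_neq0 (x : 'F_2) : (x != f0) = (x == f1).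
Proof. by case: (F2_cases x) => ->. Qed.

Lemma F2_nat (b : bool) : ((b : nat)%:R == f1 :> 'F_2) = b.
Proof. by case: b. Qed.

Lemma F2_sum n (F : 'I_n -> 'F_2) :
  ((\sum_(k < n) F k) == f1) = \big[addb/false]_(k < n) (F k == f1).
Proof.
apply: (big_morph (fun x : 'F_2 => x == f1)); first exact: F2_add1.
by [].
Qed.

Definition Gb (i j : 'I_21) : bool := nth false (nth [::] rowsL i) j.
Definition Gm : 'M['F_2]_21 := \matrix_(i, j) ((Gb i j : nat)%:R).

Definition zf (z : 'rV['F_2]_21) (k : nat) : bool := (k < 21)%nat && (z ord0 (inord k) == f1).

Lemma size_rowsL : size rowsL = 21. Proof. by []. Qed.
Lemma rowsL_sz : all (fun r => (size r <= 21)%nat) rowsL. Proof. by []. Qed.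

Lemma bridge (z : 'rV['F_2]_21) (j : 'I_21) :
  (((z *m Gm) ord0 j) == f1) = nth false (lin (zf z) rowsL) j.
Proof.
rewrite mxE F2_sum nth_lin.
change (\big[addb/false]_(k < 21) ((z ord0 k * Gm k j) == f1) =
  \big[addb/false]_(k < 21) (zf z k && nth false (nth [::] rowsL k) j)).
apply: eq_bigr => k _; rewrite mxE /zf ltn_ord inord_val /=.
rewrite -/(Gb k j); case: (Gb k j); by case: (F2_cases (z ord0 k)) => ->.
Qed.

Lemma wt_bridge (z : 'rV['F_2]_21) :
  (\sum_(j < 21) (((z *m Gm) ord0 j) != f0))%nat = wt (lin (zf z) rowsL).
Proof.
rewrite -(@sum_nth_count _ 21); last exact: size_lin rowsL_sz.
by apply: eq_bigr => j _; rewrite F2_neq0 bridge.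
Qed.

Lemma chk_i (i : nat) : (i < 21)%nat -> chk (nth [::] rowsL i) (drop i.+1 rowsL) (nth 0%nat pd21 i).
Proof. by move=> Hi; apply: (allP chk_all); rewrite mem_iota. Qed.

Lemma wit_i (i : nat) : (i < 21)%nat -> wt (lin (nth false (wit i)) rowsL) = nth 0%nat pd21 i.
Proof. by move=> Hi; apply/eqP; apply: (allP wit_all); rewrite mem_iota. Qed.

Lemma pd_lower (i : 'I_21) (x y : 'rV['F_2]_21) :
  split_pair i x y -> (nth 0%nat pd21 i <= dH (x *m Gm) (y *m Gm))%nat.
Proof.
move=> /andP[/forallP H1 /forallP H2].
pose z := x - y.
have E : forall (A B : 'rV['F_2]_21) j, (A - B) ord0 j = A ord0 j - B ord0 j.
  by move=> A B j; rewrite !mxE.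
have -> : dH (x *m Gm) (y *m Gm) = wt (lin (zf z) rowsL).
  rewrite -wt_bridge /dH; apply: eq_bigr => j _.
  by rewrite /z mulmxBl E /f0 subr_eq0.
have Hi : (i < size rowsL)%nat by rewrite size_rowsL.
rewrite -(cat_take_drop i rowsL) lin_cat; last first.
  move=> k; rewrite size_take Hi => Hk.
  have Hk21 : (k < 21)%nat by apply: ltn_trans Hk (ltn_ord i).
  rewrite /zf Hk21 /= /z E.
  have := H1 (inord k); rewrite inordK // Hk /= => /eqP ->.
  by rewrite subrr.
rewrite size_take Hi (drop_nth [::] Hi) /= addn0.
have -> : zf z i = true.
  rewrite /zf ltn_ord inord_val /z E.
  have := H2 i; rewrite eqxx /= => /andP[/eqP -> /eqP ->].
  by [].
exact: chkP (chk_i (ltn_ord i)).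
Qed.

Definition witv (i : nat) : 'rV['F_2]_21 := \row_j ((nth false (wit i) j : nat)%:R).

Lemma wit_split (i : 'I_21) : split_pair i 0 (witv i).
Proof.
apply/andP; split; apply/forallP => j; apply/implyP.
  move=> Hj; rewrite !mxE /wit nth_cat size_nseq Hj nth_nseq Hj.
  by [].
move=> /eqP Hj; rewrite !mxE /wit nth_cat size_nseq Hj ltnn subnn /=.
by [].
Qed.

Lemma wit_dH (i : 'I_21) : dH (0 *m Gm) (witv i *m Gm) = nth 0%nat pd21 i.
Proof.
rewrite -(wit_i (ltn_ord i)) mul0mx.
have -> : dH 0 (witv i *m Gm) = (\sum_(j < 21) (((witv i *m Gm) ord0 j) != f0))%nat.
  by apply: eq_bigr => j _; rewrite mxE eq_sym.
rewrite wt_bridge; congr wt; apply: lin_ext => k; rewrite size_rowsL => Hk.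
rewrite /zf Hk /= mxE inordK //.
by case: (nth false (wit i) k).
Qed.

Lemma bigmin_seq (T : eqType) (r : seq T) (P : pred T) (F : T -> nat) a x :
  x \in r -> P x -> (\big[minn/a]_(y <- r | P y) F y <= F x)%nat.
Proof.
elim: r => [|h r IH] //; rewrite in_cons big_cons => /orP [/eqP <- -> | Hx Px].
  exact: geq_minl.
case: (P h); last exact: IH.
apply: leq_trans (geq_minr _ _) _; exact: IH.
Qed.

Lemma pd_eq (i : 'I_21) : partial_dist (linear_kernel Gm) i = nth 0%nat pd21 i.
Proof.
apply/eqP; rewrite eqn_leq; apply/andP; split.
  rewrite /partial_dist.
  apply: leq_trans (@bigmin_seq _ _ (fun _ => true) _ _ 0 (mem_index_enum 0) isT) _.
  apply: leq_trans (@bigmin_seq _ _ (fun y => split_pair i 0 y) _ _ (witv i) (mem_index_enum (witv i)) (wit_split i)) _.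
  by rewrite /linear_kernel wit_dH.
apply: (big_ind (fun v => nth 0%nat pd21 i <= v)%nat).
- by move: (ltn_ord i); case: (nat_of_ord i) => [|[|[|[|[|[|[|[|[|[|[|[|[|[|[|[|[|[|[|[|[|]]]]]]]]]]]]]]]]]]]]].
- by move=> a b Ha Hb; rewrite leq_min Ha Hb.
move=> x _.
apply: (big_ind (fun v => nth 0%nat pd21 i <= v)%nat).
- by move: (ltn_ord i); case: (nat_of_ord i) => [|[|[|[|[|[|[|[|[|[|[|[|[|[|[|[|[|[|[|[|[|]]]]]]]]]]]]]]]]]]]]].
- by move=> a b Ha Hb; rewrite leq_min Ha Hb.
move=> y Hxy; exact: pd_lower.
Qed.

Lemma Gm_trig_l : all (fun i => all (fun j => (i < j)%nat ==> ~~ nth false (nth [::] rowsL i) j) (iota 0 21)) (iota 0 21).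
Proof. by []. Qed.
Lemma Gm_diag_l : all (fun i => nth false (nth [::] rowsL i) i) (iota 0 21).
Proof. by []. Qed.

Lemma Gm_unit : Gm \in unitmx.
Proof.
have Ht : is_trig_mx Gm.
  apply/is_trig_mxP => i j Hij; rewrite mxE.
  have Hi : (nat_of_ord i \in iota 0 21) by rewrite mem_iota ltn_ord.
  have Hj : (nat_of_ord j \in iota 0 21) by rewrite mem_iota ltn_ord.
  have := allP (allP Gm_trig_l i Hi) j Hj.
  by rewrite Hij /= /Gb => /negbTE ->.
rewrite unitmxE det_trig // big1 ?unitr1 // => i _.
have Hi : (nat_of_ord i \in iota 0 21) by rewrite mem_iota ltn_ord.
rewrite mxE /Gb (allP Gm_diag_l i Hi).
by [].
Qed.

Lemma bigRmax_seq (T : eqType) (r : seq T) (F : T -> R) x :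
  x \in r -> Rle (F x) (\big[Rmax/0%R]_(y <- r) F y).
Proof.
elim: r => [|h r IH] //; rewrite in_cons big_cons => /orP [/eqP <- | Hx].
  exact: Rmax_l.
apply: Rle_trans (IH Hx) _; exact: Rmax_r.
Qed.

Theorem mainTheorem16 :
  (exists G : 'M['F_2]_21,
      G \in unitmx /\
      forall i : 'I_21, partial_dist (linear_kernel G) i = nth O pd21 i)
  /\
  (E_max 21 >= / INR 21 * \big[Rplus/0%R]_(i < 21) logb 21 (INR (nth O pd21 i)))%R.
Proof.
split; first by exists Gm; split; [exact: Gm_unit | exact: pd_eq].
have inj : injective (fun u : word 21 => u *m Gm).
  exact: can_inj (mulmxK Gm_unit).
pose p := perm inj.
have Hp : (fun u => p u) = linear_kernel Gm.
  by apply: functional_extensionality => u; rewrite permE.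
apply: Rle_ge.
have -> : (/ INR 21 * \big[Rplus/0%R]_(i < 21) logb 21 (INR (nth O pd21 i)))%R = exponent (fun u => p u).
  rewrite Hp /exponent; congr Rmult; apply: eq_bigr => i _; by rewrite pd_eq.
rewrite /E_max.
exact: (@bigRmax_seq _ _ (fun g : {perm word 21} => exponent (fun u => g u)) p (mem_index_enum p)).
Qed.
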